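(* Let $P(\lambda)=\begin{bmatrix} A(\lambda) & B(\lambda)\\ -C(\lambda) & D(\lambda)\end{bmatrix}$ be a polynomial system matrix of a rational matrix $G(\lambda)$, where $A(\lambda)$ and $C(\lambda)$ are right coprime. Let $H_2(\lambda)$ be a right polynomial basis of $G(\lambda)$ and $H_1(\lambda)=-A(\lambda)^{-1}B(\lambda)H_2(\lambda)$. Then $H_1(\lambda)$ is polynomial and $\begin{bmatrix}H_1(\lambda)\\H_2(\lambda)\end{bmatrix}$ is a right polynomial basis of $P(\lambda)$.
   Context: $\mathbb F$ is an arbitrary field. A polynomial system matrix of $G(\lambda)\in\mathbb F(\lambda)^{p\times m}$ is $P(\lambda)=\begin{bmatrix} A(\lambda) & B(\lambda)\\ -C(\lambda) & D(\lambda)\end{bmatrix}$ with $A\in\mathbb F[\lambda]^{n\times n}$ regular, $B,C,D$ polynomial of compatible sizes, and $G=D+CA^{-1}B$. $A\in\mathbb F[\lambda]^{n\times n}$ and $C\in\mathbb F[\lambda]^{p\times n}$ are right coprime if all their common right divisors are unimodular (equivalently, there exist polynomial $X,Y$ with $XA+YC=I_n$). A right polynomial basis of a rational matrix $G$ is a polynomial matrix whose columns form a basis of $\mathcal N_r(G)=\{x\in\mathbb F(\lambda)^m: Gx=0\}$. *)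

(* Defs.v *)
From HB Require Import structures.
From mathcomp Require Import all_boot all_order all_algebra.
From mathcomp Require Import fraction.
Set Implicit Arguments. Unset Strict Implicit. Unset Printing Implicit Defensive.
Import GRing.Theory.
Local Open Scope ring_scope.

Notation ratf F := {fraction {poly F}}.

Definition pmx {F : fieldType} {m n : nat} (M : 'M[{poly F}]_(m, n))
  : 'M[ratf F]_(m, n) := map_mx (@FracField.tofrac _) M.

Definition unimodular {F : fieldType} {n : nat} (U : 'M[{poly F}]_n) : bool :=
  U \in unitmx.

Definition right_coprime {F : fieldType} {n p : nat}
  (A : 'M[{poly F}]_n) (C : 'M[{poly F}]_(p, n)) : Prop :=
  forall (R A' : 'M[{poly F}]_n) (C' : 'M[{poly F}]_(p, n)),
    A = A' *m R -> C = C' *m R -> unimodular R.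

(* H (m x k polynomial) is a right polynomial basis of the rational matrix
   G (q x m): its k columns form a basis of the right null space
   N_r(G) = {x in F(lambda)^m | G x = 0}: they lie in N_r(G), are linearly
   independent over F(lambda), and span N_r(G). *)
Definition right_poly_basis {F : fieldType} {q m k : nat}
  (G : 'M[ratf F]_(q, m)) (H : 'M[{poly F}]_(m, k)) : Prop :=
  [/\ G *m pmx H = 0,
      \rank (pmx H) = k &
      forall x : 'cV[ratf F]_m, G *m x = 0 -> (x^T <= (pmx H)^T)%MS].

(* Main.v *)
Require Import Defs.
From HB Require Import structures.
From mathcomp Require Import all_boot all_order all_algebra.
From mathcomp Require Import fraction generic_quotient.
Import GRing.Theory.
Local Open Scope ring_scope.
Local Open Scope quotient_scope.
Local Notation "x %:F" := (@FracField.tofrac _ x) (format "x %:F").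
From Stdlib Require Import Classical.
From mathcomp Require Import ring zify.

Section Aux.
Variable F : fieldType.
Local Notation P := {poly F}.
Local Notation K := {fraction P}.

Definition ispoly (x : K) := exists p : P, x = p%:F.
Definition ispmx {m n} (M : 'M[K]_(m, n)) := exists M', M = @pmx F m n M'.

Lemma pmx_inj m n : injective (@pmx F m n).
Proof.
move=> A B /matrixP e; apply/matrixP => i j; move: (e i j); rewrite !mxE.
by move/eqP; rewrite tofrac_eq => /eqP.
Qed.

Lemma pmxM m n k (A : 'M[P]_(m, n)) (B : 'M[P]_(n, k)) : pmx (A *m B) = pmx A *m pmx B.
Proof. exact: map_mxM. Qed.

Lemma ispmx_pmx m n (M : 'M[P]_(m, n)) : ispmx (pmx M).
Proof. by exists M. Qed.

Lemma ispmxD m n (X Y : 'M[K]_(m, n)) : ispmx X -> ispmx Y -> ispmx (X + Y).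
Proof. by move=> [X' ->] [Y' ->]; exists (X' + Y'); rewrite /pmx map_mxD. Qed.

Lemma ispmxN m n (X : 'M[K]_(m, n)) : ispmx X -> ispmx (- X).
Proof. by move=> [X' ->]; exists (- X'); rewrite /pmx map_mxN. Qed.

Lemma ispmxM m n k (X : 'M[K]_(m, n)) (Y : 'M[K]_(n, k)) :
  ispmx X -> ispmx Y -> ispmx (X *m Y).
Proof. by move=> [X' ->] [Y' ->]; exists (X' *m Y'); rewrite pmxM. Qed.

Lemma ispmxZ m n (p : P) (X : 'M[K]_(m, n)) : ispmx X -> ispmx (p%:F *: X).
Proof. by move=> [X' ->]; exists (p *: X'); rewrite /pmx map_mxZ. Qed.

Lemma ispmx_delta m n i j : ispmx (delta_mx i j : 'M[K]_(m, n)).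
Proof. by exists (delta_mx i j); rewrite /pmx map_delta_mx. Qed.

Lemma ispmx1 m : ispmx (1%:M : 'M[K]_m).
Proof. by exists 1%:M; rewrite /pmx map_mx1. Qed.

Lemma ispmxP m n (M : 'M[K]_(m, n)) : (forall i j, ispoly (M i j)) -> ispmx M.
Proof.
move=> h.
have h1 : forall i, exists f : 'I_n -> P, forall j, M i j = (f j)%:F.
  by move=> i; apply: (@fin_all_exists _ (fun=> P) (fun j p => M i j = p%:F)) => j; apply: h.
have [g hg] := @fin_all_exists _ (fun=> 'I_n -> P) (fun i f => forall j, M i j = (f j)%:F) h1.
by exists (\matrix_(i, j) g i j); apply/matrixP => i j; rewrite !mxE hg.
Qed.

Lemma ispmx_entry m n (M : 'M[K]_(m, n)) i j : ispmx M -> ispoly (M i j).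
Proof. by move=> [M' ->]; exists (M' i j); rewrite mxE. Qed.

Lemma ispmx_col m n (M : 'M[K]_(m, n)) j : ispmx M -> ispmx (col j M).
Proof. by move=> [M' ->]; exists (col j M'); rewrite /pmx map_col. Qed.

Lemma frac_den (x : K) : exists2 b : P, b != 0 & ispoly (x * b%:F).
Proof.
elim/quotW: x => r. exists (r.2); first exact: denom_ratioP.
exists (r.1).
rewrite /GRing.mul /= !piE; apply/eqP; rewrite eqmodE /= FracField.equivfE /=.
rewrite !numden_Ratio ?oner_eq0 ?mulf_neq0 ?denom_ratioP ?oner_neq0 //.
by rewrite !mulr1 mulrC.
Qed.

Lemma common_den m n (y : 'M[K]_(m, n)) : exists2 q : P, q != 0 & ispmx (q%:F *: y).
Proof.
have h : forall ij : 'I_m * 'I_n, exists b : P, (b != 0) /\ ispoly (y ij.1 ij.2 * b%:F).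
  by move=> ij; have [b b0 hb] := frac_den (y ij.1 ij.2); exists b.
have [f hf] := @fin_all_exists _ (fun=> P) (fun ij b => (b != 0) /\ ispoly (y ij.1 ij.2 * b%:F)) h.
exists (\prod_ij f ij).
  by apply/prodf_neq0 => ij _; case: (hf ij).
apply: ispmxP => i j; rewrite mxE (bigD1 (i, j)) //= rmorphM mulrAC.
have [_ [p hp]] := hf (i, j); rewrite /= in hp.
by rewrite [_ * y i j]mulrC hp -rmorphM; eexists.
Qed.

Lemma irr_factor (N : nat) : forall q : P, (size q <= N)%N -> (1 < size q)%N ->
  exists2 pi : P, pi %| q & irreducible_poly pi.
Proof.
elim: N => [|N IH] q hN hq; first by move: (leq_trans hq hN).
have [hirr|hn] := classic (irreducible_poly q); first by exists q.
have q0 : q != 0 by rewrite -size_poly_gt0 (ltn_trans _ hq).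
have : ~ (forall r : P, size r != 1%N -> r %| q -> r %= q).
  by move=> h; apply: hn; split.
move=> /(not_all_ex_not _ _) [r hr].
have [hr1 hr'] := imply_to_and _ _ hr.
have [hrq hnr] := imply_to_and _ _ hr'.
have r0 : r != 0 by apply: contraNneq q0 => r0; move: hrq; rewrite r0 dvd0p.
have hle := dvdp_leq q0 hrq.
have hlt : (size r < size q)%N.
  rewrite ltn_neqAle hle andbT; apply/negP => e; apply: hnr.
  by rewrite -(dvdp_size_eqp hrq) e.
have hr2 : (1 < size r)%N.
  by move: hr1 r0; rewrite -size_poly_gt0; case: (size r) => [|[|]].
have hrN : (size r <= N)%N by rewrite -ltnS (leq_trans hlt hN).
have [pi hpi hirr] := IH r hrN hr2.
by exists pi => //; apply: dvdp_trans hpi hrq.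
Qed.

Section Key.
Variables (n p : nat) (A : 'M[P]_n) (C : 'M[P]_(p, n)).
Hypothesis hAC : right_coprime A C.

Definition inM (y : 'cV[K]_n) := ispmx (pmx A *m y) /\ ispmx (pmx C *m y).

Lemma inMZ (c : P) y : inM y -> inM (c%:F *: y).
Proof. by case=> h1 h2; split; rewrite -scalemxAr; apply: ispmxZ. Qed.

Lemma no_bad (z : 'cV[K]_n) (pi : P) (U : 'cV[P]_n) (i : 'I_n) (a b : P) :
  inM z -> pi%:F *: z = pmx U -> a * U i 0 + b * pi = 1 -> (1 < size pi)%N -> False.
Proof.
move=> hz hU hab hpi.
set e := (delta_mx i 0 : 'cV[K]_n).
set E := (delta_mx 0 i : 'rV[K]_n).
set w := a%:F *: z + b%:F *: e.
have hzi : z i 0 * pi%:F = (U i 0)%:F.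
  by move/matrixP: hU => /(_ i 0); rewrite !mxE mulrC.
have hwi : w i 0 * pi%:F = 1.
  rewrite /w /e !mxE !eqxx /= mulr1 mulrDl -mulrA hzi -!rmorphM -rmorphD.
  by rewrite hab rmorph1.
have hpw : ispmx (pi%:F *: w).
  rewrite /w scalerDr scalerA mulrC -scalerA hU scalerA mulrC -scalerA.
  by apply: ispmxD; apply: ispmxZ; [apply: ispmx_pmx | apply: ispmxZ; apply: ispmx_delta].
set s := w - e.
set t := pi%:F *: e - pi%:F *: w.
have ht : ispmx t by apply: ispmxD; [apply: ispmxZ; apply: ispmx_delta | apply: ispmxN].
set S := 1%:M + s *m E.
set R := 1%:M + t *m E.
have hR : ispmx R.
  by apply: ispmxD; [apply: ispmx1 | apply: ispmxM => //; apply: ispmx_delta].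
have EX : forall v : 'cV[K]_n, E *m v = (v i 0)%:M.
  by move=> v; apply/matrixP => r c; rewrite -rowE (ord1 r) (ord1 c) !mxE eqxx mulr1n.
have hti : t i 0 = pi%:F - 1.
  have := hwi; rewrite /w !mxE !eqxx /= mulr1 => hw'.
  by rewrite mulr1 [_ * (_ + _)]mulrC hw'.
have hsum : t + s + t i 0 *: s = 0.
  by rewrite hti; apply/matrixP=> r c; rewrite /t /s !mxE; ring.
have hSR : S *m R = 1%:M.
  rewrite /S /R mulmxDl !mulmxDr !mul1mx !mulmx1.
  have -> : s *m E *m (t *m E) = (t i 0 *: s) *m E.
    by rewrite mulmxA -(mulmxA s) EX mul_mx_scalar.
  rewrite -addrA; have -> : t *m E + (s *m E + (t i 0 *: s) *m E) = (t + s + t i 0 *: s) *m E.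
    by rewrite !mulmxDl addrA.
  by rewrite hsum mul0mx addr0.
have hAS : forall r (X : 'M[P]_(r, n)), ispmx (pmx X *m z) -> ispmx (pmx X *m S).
  move=> r X hX; rewrite /S mulmxDr mulmx1 mulmxA; apply: ispmxD; first exact: ispmx_pmx.
  apply: ispmxM; last exact: ispmx_delta.
  rewrite /s /w mulmxBr mulmxDr -!scalemxAr.
  apply: ispmxD; [apply: ispmxD | apply: ispmxN]; try apply: ispmxZ => //;
    by apply: ispmxM; [apply: ispmx_pmx | apply: ispmx_delta].
case: hz => hA hC.
have [A' hA'] := hAS _ A hA.
have [C' hC'] := hAS _ C hC.
have [R0 hR0] := hR.
have eSRp : forall r (X : 'M[P]_(r, n)) X', pmx X *m S = pmx X' -> X = X' *m R0.
  by move=> r X X' h; apply: pmx_inj; rewrite pmxM -h -hR0 -mulmxA hSR mulmx1.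
have hu := hAC R0 A' C' (eSRp _ _ _ hA') (eSRp _ _ _ hC').
have hS : S = pmx (invmx R0).
  have h1 : pmx R0 *m pmx (invmx R0) = 1%:M by rewrite -pmxM mulmxV // /pmx map_mx1.
  by rewrite -[S]mulmx1 -h1 mulmxA -hR0 hSR mul1mx.
have hSii : S i i = w i 0.
  rewrite /S /s !mxE big_ord1 !mxE !eqxx /=; ring.
move: hSii; rewrite hS mxE => hw.
have h : invmx R0 i i * pi = 1 by apply/eqP; rewrite -tofrac_eq tofracM tofrac1 hw hwi.
have : pi %| 1 by rewrite -h dvdp_mulIr.
move/(dvdp_leq (oner_neq0 _)); rewrite size_poly1 => h2.
by move: hpi; rewrite ltnNge h2.
Qed.

Lemma keyN (N : nat) : forall (q : P) (y : 'cV[K]_n), (size q <= N)%N -> q != 0 ->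
  ispmx (q%:F *: y) -> inM y -> ispmx y.
Proof.
elim: N => [|N IH] q y hN q0 hqy hy.
  by move: hN; rewrite leqn0 size_poly_eq0 (negbTE q0).
case: (leqP (size q) 1) => hs.
  have hq := size1_polyC hs.
  have c0 : q`_0 != 0 by apply: contraNneq q0 => c0; rewrite hq c0.
  have -> : y = ((q`_0)^-1%:P)%:F *: (q%:F *: y).
    by rewrite scalerA -tofracM {2}hq -polyCM mulVf // scale1r.
  exact: ispmxZ.
have [pi hpi hirr] := @irr_factor (size q) q (leqnn _) hs.
set q' := q %/ pi.
have hq : q = q' * pi by rewrite divpK.
have pi0 := irredp_neq0 hirr.
have q'0 : q' != 0 by apply: contraNneq q0 => e; rewrite hq e mul0r.
have hsz : (size q' <= N)%N.
  have := size_mul q'0 pi0; rewrite -hq => e.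
  have := hirr.1 => h1; move: hN h1; rewrite e; move: (size q') (size pi) => a b; case: b => [|b] //=; rewrite addnS /=; lia.
set z := q'%:F *: y.
have hzM : inM z := inMZ q' y hy.
have hpz : pi%:F *: z = q%:F *: y by rewrite scalerA -tofracM mulrC -hq.
case: (classic (ispmx z)) => hz; first exact: (IH q' y hsz q'0 hz hy).
exfalso.
have [i hi] : exists i, ~ ispoly (z i 0).
  apply: NNPP => h; apply: hz; apply: ispmxP => i j; rewrite (ord1 j).
  by apply: NNPP => h'; apply: h; exists i.
have [U hU] := hqy; rewrite -hpz in hU.
have hzi : z i 0 * pi%:F = (U i 0)%:F.
  by move/matrixP: hU => /(_ i 0); rewrite !mxE mulrC.
have ndiv : ~~ (pi %| U i 0).
  apply/negP => /dvdpP [c hc]; apply: hi; exists c.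
  have pF0 : pi%:F != 0 by rewrite tofrac_eq0.
  by apply: (mulIf pF0); rewrite hzi hc tofracM.
have cop : coprimep pi (U i 0).
  rewrite coprimep_def; apply/negPn/negP => hg.
  have hgp := hirr.2 _ hg (dvdp_gcdl pi (U i 0)).
  by move: ndiv; rewrite -(eqp_dvdl _ hgp) dvdp_gcdr.
have [[a' b'] /= hab] := Bezout_eq1_coprimepP _ _ cop.
apply: (@no_bad z pi U i b' a' hzM hU _ hirr.1).
by rewrite addrC.
Qed.

Lemma key (y : 'cV[K]_n) : inM y -> ispmx y.
Proof.
move=> hy; have [q q0 hq] := @common_den _ _ y.
exact: (@keyN (size q) q y (leqnn _) q0 hq hy).
Qed.

Lemma key_mx k (Y : 'M[K]_(n, k)) :
  ispmx (pmx A *m Y) -> ispmx (pmx C *m Y) -> ispmx Y.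
Proof.
move=> hA hC; apply: ispmxP => i j.
have hc : ispmx (col j Y).
  apply: key; split; rewrite colE mulmxA -colE; exact: ispmx_col.
by have := @ispmx_entry _ _ _ i 0 hc; rewrite mxE.
Qed.
End Key.
End Aux.

Theorem lemma3p7 (F : fieldType) (n m p k : nat)
  (A : 'M[{poly F}]_n) (B : 'M[{poly F}]_(n, m))
  (C : 'M[{poly F}]_(p, n)) (D : 'M[{poly F}]_(p, m))
  (G : 'M[ratf F]_(p, m)) (H2 : 'M[{poly F}]_(m, k)) :
  \det A != 0 ->
  G = pmx D + pmx C *m invmx (pmx A) *m pmx B ->
  right_coprime A C ->
  right_poly_basis G H2 ->
  exists H1 : 'M[{poly F}]_(n, k),
    pmx H1 = - (invmx (pmx A) *m pmx B *m pmx H2) /\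
    right_poly_basis (pmx (block_mx A B (- C) D)) (col_mx H1 H2).
Proof.
move=> hA hG hAC [hGH hrk hsp].
have uA : pmx A \in unitmx.
  by rewrite unitmxE /pmx det_map_mx unitfE tofrac_eq0.
set Ai := invmx (pmx A).
set Y := - (Ai *m pmx B *m pmx H2).
have hAY : pmx A *m Y = - (pmx B *m pmx H2).
  by rewrite /Y mulmxN -mulmxA mulKVmx.
have hCY : pmx C *m Y = pmx D *m pmx H2.
  rewrite hG mulmxDl addrC in hGH.
  have e : pmx C *m Ai *m pmx B *m pmx H2 = - (pmx D *m pmx H2).
    by apply/eqP; rewrite -addr_eq0 hGH.
  by rewrite /Y mulmxN !mulmxA e opprK.
have [H1 hH1] : ispmx F Y.
  apply: (@key_mx F n p A C hAC k Y).
    by rewrite hAY -pmxM; apply/ispmxN/ispmx_pmx.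
  by rewrite hCY -pmxM; apply: ispmx_pmx.
exists H1; split; first by rewrite -hH1.
have hP : pmx (block_mx A B (-C) D) = block_mx (pmx A) (pmx B) (- pmx C) (pmx D).
  by rewrite /pmx map_block_mx map_mxN.
have hH : pmx (col_mx H1 H2) = col_mx Y (pmx H2).
  by rewrite /pmx map_col_mx -/(pmx H1) -hH1.
rewrite /right_poly_basis hP hH; split.
- by rewrite mul_block_col hAY mulNmx hCY !addNr col_mx0.
- apply/eqP; rewrite eqn_leq rank_leq_col -{1}hrk /=.
  apply: leq_trans (mxrankS (addsmxSr Y (pmx H2))) _.
  by rewrite addsmxE.
- move=> x hx.
  rewrite -[x]vsubmxK in hx *.
  set x1 := usubmx x; set x2 := dsubmx x.
  move: hx; rewrite mul_block_col => /eqP; rewrite col_mx_eq0 => /andP [/eqP h1 /eqP h2].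
  have hx1 : x1 = - (Ai *m pmx B *m x2).
    move/eqP: h1; rewrite addr_eq0 => /eqP h1.
    by rewrite -(mulKmx uA x1) h1 mulmxN mulmxA.
  have hGx : G *m x2 = 0.
    rewrite hG mulmxDl.
    have -> : pmx C *m Ai *m pmx B *m x2 = - (pmx C *m x1).
      by rewrite hx1 mulmxN !mulmxA opprK.
    by rewrite addrC -mulNmx.
  have [c hc] := submxP (hsp x2 hGx).
  have hx2 : x2 = pmx H2 *m c^T by rewrite -[x2]trmxK hc trmx_mul trmxK.
  apply/submxP; exists c.
  rewrite -[c]trmxK -trmx_mul; congr trmx.
  rewrite mul_col_mx -hx2; congr col_mx.
  by rewrite hx1 {1}hx2 /Y mulNmx !mulmxA.
Qed.
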